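(* Let $B,B'\in M_n(R)$ with $B'=A^\nabla BA$ for some non-singular $A\in M_n(R)$. Then: (1) every supertropical eigenvalue of $B$ is a supertropical eigenvalue of $B'$; (2) if all coefficients of $f_{B'}$ are tangible (or $0_R$), then $f_{B'}=f_B$; (3) $f_{B'}(B)$ is a ghost matrix, i.e. all its entries lie in $G\cup\{0_R\}$.
   Context: Supertropical semiring $R=T\cup G\cup\{-\infty\}$: $T=\mathcal G$ an ordered abelian group (tangible), $G=\{a^\nu\}$ a copy (ghost); $a+b$ is the element of larger $\nu$-value if the $\nu$-values differ and $a^\nu$ if equal; multiplication adds $\nu$-values, is ghost if a factor is ghost, $-\infty$ absorbing; $0_R=-\infty$, $1_R=0$. $\det(A)=\sum_{\sigma\in S_n}\prod_i a_{i,\sigma(i)}$; $A$ non-singular iff $\det(A)\in T$; $\operatorname{adj}(A)_{i,j}=\det(A_{j,i})$; $A^\nabla=\det(A)^{-1}\operatorname{adj}(A)$. Characteristic polynomial $f_M(x)=\det(xI+M)$, the formal polynomial whose $x^k$-coefficient is the sum of determinants of the $(n-k)\times(n-k)$ principal submatrices of $M$. For a polynomial $f=\sum c_ix^i$, $f(r)=\sum c_ir^i$ and $f(M)=\sum c_iM^i$ with $M^0=I$. A supertropical eigenvalue of $M$ is an element $\lambda\in T\cup\{0_R\}$ that is a root of $f_M$, i.e. $f_M(\lambda)\in G\cup\{0_R\}$. *)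

(* Defs.v *)
From HB Require Import structures.
From mathcomp Require Import all_boot all_order all_algebra all_fingroup.
Set Implicit Arguments. Unset Strict Implicit. Unset Printing Implicit Defensive.
Import Order.TTheory GRing.Theory.
Local Open Scope order_scope.

Record ordAbGroup := OrdAbGroup {
  oag_sort :> zmodType;
  oag_le : rel oag_sort;
  oag_le_refl : reflexive oag_le;
  oag_le_anti : antisymmetric oag_le;
  oag_le_trans : transitive oag_le;
  oag_le_total : total oag_le;
  oag_leD2r : forall x y z : oag_sort, oag_le x y -> oag_le (x + z)%R (y + z)%R
}.

Definition oag_lt (G : ordAbGroup) (x y : G) : bool :=
  oag_le x y && ~~ oag_le y x.

Section Supertropical.
Variable G : ordAbGroup.

(* Elements of R = T ∪ G ∪ {-oo}: tangible a, ghost a^nu, zero -oo. *)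
Inductive stR : Type :=
| stZero : stR
| stTan  : G -> stR
| stGh   : G -> stR.

Definition st_one : stR := stTan 0%R.   (* 1_R = 0 *)

Definition st_add (x y : stR) : stR :=
  match x, y with
  | stZero, _ => y
  | _, stZero => x
  | stTan a, stTan b | stTan a, stGh b | stGh a, stTan b | stGh a, stGh b =>
      if oag_lt a b then y else if oag_lt b a then x else stGh a
  end.

Definition st_mul (x y : stR) : stR :=
  match x, y with
  | stZero, _ | _, stZero => stZero
  | stTan a, stTan b => stTan (a + b)%R
  | stTan a, stGh b | stGh a, stTan b | stGh a, stGh b => stGh (a + b)%R
  end.

Definition st_tanz (x : stR) : bool := if x is stGh _ then false else true.
Definition st_ghostz (x : stR) : bool := if x is stTan _ then false else true.
Definition st_tangible (x : stR) : bool := if x is stTan _ then true else false.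

(* inverse of a tangible element (irrelevant value elsewhere) *)
Definition st_inv (x : stR) : stR :=
  match x with stTan a => stTan (- a)%R | _ => stZero end.

Definition st_pow (x : stR) (k : nat) : stR := iter k (st_mul x) st_one.

Definition st_idmx n : 'M[stR]_n :=
  \matrix_(i, j) (if i == j then st_one else stZero).

Definition st_mulmx n (A B : 'M[stR]_n) : 'M[stR]_n :=
  \matrix_(i, j) \big[st_add/stZero]_(k < n) st_mul (A i k) (B k j).

Definition st_addmx n (A B : 'M[stR]_n) : 'M[stR]_n :=
  \matrix_(i, j) st_add (A i j) (B i j).

Definition st_scalemx n (c : stR) (A : 'M[stR]_n) : 'M[stR]_n :=
  \matrix_(i, j) st_mul c (A i j).

Definition st_zeromx n : 'M[stR]_n := \matrix_(i, j) stZero.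

Definition st_expmx n (M : 'M[stR]_n) (k : nat) : 'M[stR]_n :=
  iter k (st_mulmx M) (st_idmx n).

Definition st_det n (A : 'M[stR]_n) : stR :=
  \big[st_add/stZero]_(s : 'S_n) \big[st_mul/st_one]_(i < n) A i (s i).

Definition st_nonsingular n (A : 'M[stR]_n) : bool := st_tangible (st_det A).

Definition st_minor n (j i : 'I_n) (A : 'M[stR]_n) : 'M[stR]_(n.-1) :=
  \matrix_(k, l) A (lift j k) (lift i l).

Definition st_adj n (A : 'M[stR]_n) : 'M[stR]_n :=
  \matrix_(i, j) st_det (st_minor j i A).

Definition st_nabla n (A : 'M[stR]_n) : 'M[stR]_n :=
  st_scalemx (st_inv (st_det A)) (st_adj A).

Definition st_principal n (S : {set 'I_n}) (A : 'M[stR]_n) : 'M[stR]_#|S| :=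
  \matrix_(k, l) A (enum_val k) (enum_val l).

(* characteristic polynomial f_M(x) = det(xI + M), as the formal polynomial
   of degree n whose x^k coefficient is the sum of the determinants of the
   (n-k)x(n-k) principal submatrices of M. *)
Definition st_charpoly n (M : 'M[stR]_n) : {ffun 'I_n.+1 -> stR} :=
  [ffun k : 'I_n.+1 =>
     \big[st_add/stZero]_(S : {set 'I_n} | #|S| == n - k)
        st_det (st_principal S M)].

Definition st_peval n (f : {ffun 'I_n.+1 -> stR}) (r : stR) : stR :=
  \big[st_add/stZero]_(k < n.+1) st_mul (f k) (st_pow r k).

Definition st_pevalmx n m (f : {ffun 'I_n.+1 -> stR}) (M : 'M[stR]_m)
  : 'M[stR]_m :=
  \big[@st_addmx m/st_zeromx m]_(k < n.+1) st_scalemx (f k) (st_expmx M k).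

Definition st_eigenvalue n (M : 'M[stR]_n) (l : stR) : Prop :=
  st_tanz l /\ st_ghostz (st_peval (st_charpoly M) l).

Definition st_ghostmx n (M : 'M[stR]_n) : Prop := forall i j, st_ghostz (M i j).

End Supertropical.

Arguments stZero {G}.

(* Main.v *)
Require Import Defs.
From HB Require Import structures.
From mathcomp Require Import all_boot all_order all_algebra all_fingroup.
From mathcomp Require Import mpoly.
From mathcomp Require Import zify.
Set Implicit Arguments. Unset Strict Implicit. Unset Printing Implicit Defensive.

Module M1.

Section StAlg.
Variable G : ordAbGroup.
Local Notation R := (stR G).
Implicit Types (a b c : G) (x y z : R).

Lemma le_refl' a : oag_le a a. Proof. exact: oag_le_refl. Qed.
Lemma lt_irr a : oag_lt a a = false.
Proof. by rewrite /oag_lt le_refl'. Qed.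
Lemma lt_asym a b : oag_lt a b -> oag_lt b a -> False.
Proof. by rewrite /oag_lt => /andP[-> _] /andP[_ /negP]. Qed.
Lemma lt_trans' a b c : oag_lt a b -> oag_lt b c -> oag_lt a c.
Proof.
rewrite /oag_lt => /andP[ab nba] /andP[bc ncb]; rewrite (oag_le_trans ab bc) /=.
apply/negP => ca; case/negP: nba; exact: oag_le_trans bc ca.
Qed.
Lemma nlt_le a b : ~~ oag_lt a b -> oag_le b a.
Proof.
rewrite /oag_lt negb_and negbK; case/orP=> // nab.
by case/orP: (oag_le_total a b) => h; [rewrite h in nab|].
Qed.

Variant cmp_spec a b : bool -> bool -> Prop :=
| CmpLt of oag_lt a b : cmp_spec a b true false
| CmpGt of oag_lt b a : cmp_spec a b false true
| CmpEq of a = b : cmp_spec a b false false.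

Lemma cmpP a b : cmp_spec a b (oag_lt a b) (oag_lt b a).
Proof.
case ab: (oag_lt a b); case ba: (oag_lt b a).
- by case: (lt_asym ab ba).
- exact: CmpLt.
- exact: CmpGt.
- apply: CmpEq; apply: oag_le_anti; rewrite !nlt_le ?ab ?ba //.
Qed.

Lemma ltD2r a b c : oag_lt (a + c)%R (b + c)%R = oag_lt a b.
Proof.
rewrite /oag_lt.
have H : forall u v : G, oag_le (u + c)%R (v + c)%R = oag_le u v.
  move=> u v; apply/idP/idP => h; last exact: oag_leD2r.
  have := oag_leD2r (- c)%R h; by rewrite -!GRing.addrA GRing.subrr !GRing.addr0.
by rewrite !H.
Qed.
Lemma ltD2l a b c : oag_lt (c + a)%R (c + b)%R = oag_lt a b.
Proof. by rewrite ![(c + _)%R]GRing.addrC ltD2r. Qed.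

Ltac ordsolve :=
  solve [ by []
        | exfalso; eauto using lt_asym, lt_trans'
        | exfalso; match goal with H : is_true (oag_lt ?a ?a) |- _ => by rewrite lt_irr in H end ].

Ltac stcases :=
  repeat (match goal with
    | |- context[oag_lt ?a ?b] => case: (cmpP a b) => ?
    | H : ?a = ?b |- _ => subst a || subst b
    end; rewrite ?lt_irr /=); try ordsolve.

Lemma st_addC : commutative (@st_add G).
Proof. by case=> [|a|a] [|b|b] //=; stcases. Qed.

Lemma st_add0r : left_id stZero (@st_add G). Proof. by case. Qed.
Lemma st_addr0 : right_id stZero (@st_add G). Proof. by case. Qed.

Lemma st_addA : associative (@st_add G).
Proof. by case=> [|a|a] [|b|b] [|c|c] //=; stcases. Qed.

Lemma st_mulC : commutative (@st_mul G).
Proof. by case=> [|a|a] [|b|b] //=; rewrite GRing.addrC. Qed.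
Lemma st_mulA : associative (@st_mul G).
Proof. by case=> [|a|a] [|b|b] [|c|c] //=; rewrite GRing.addrA. Qed.
Lemma st_mul1r : left_id (st_one G) (@st_mul G).
Proof. by case=> [|a|a] //=; rewrite GRing.add0r. Qed.
Lemma st_mulr1 : right_id (st_one G) (@st_mul G).
Proof. by move=> x; rewrite st_mulC st_mul1r. Qed.
Lemma st_mul0r : left_zero stZero (@st_mul G). Proof. by []. Qed.
Lemma st_mulr0 : right_zero stZero (@st_mul G). Proof. by case. Qed.

Lemma st_mulDl : left_distributive (@st_mul G) (@st_add G).
Proof.
case=> [|a|a] [|b|b] [|c|c] //=; rewrite ?ltD2r; stcases.
Qed.
Lemma st_mulDr : right_distributive (@st_mul G) (@st_add G).
Proof. by move=> x y z; rewrite !(st_mulC x) st_mulDl. Qed.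

End StAlg.

End M1.
Import M1.

Module M2.

HB.instance Definition _ (G : ordAbGroup) :=
  Monoid.isComLaw.Build (stR G) stZero (@st_add G) (@st_addA G) (@st_addC G) (@st_add0r G).
HB.instance Definition _ (G : ordAbGroup) :=
  Monoid.isComLaw.Build (stR G) (st_one G) (@st_mul G) (@st_mulA G) (@st_mulC G) (@st_mul1r G).
HB.instance Definition _ (G : ordAbGroup) :=
  Monoid.isMulLaw.Build (stR G) stZero (@st_mul G) (@st_mul0r G) (@st_mulr0 G).
HB.instance Definition _ (G : ordAbGroup) :=
  Monoid.isAddLaw.Build (stR G) (@st_mul G) (@st_add G) (@st_mulDl G) (@st_mulDr G).

Section StBig.
Variable G : ordAbGroup.
Local Notation R := (stR G).
Implicit Types (a b c : G) (x y z : R).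
Local Notation "x + y" := (st_add x y).
Local Notation "x * y" := (st_mul x y).

Definition surp x y := exists2 g, st_ghostz g & x = y + g.

Lemma ghostzD x y : st_ghostz x -> st_ghostz y -> st_ghostz (x + y).
Proof. case: x => [|a|a] // _; case: y => [|b|b] //= _; by case: (oag_lt a b); case: (oag_lt b a). Qed.
Lemma ghostzMl x y : st_ghostz x -> st_ghostz (x * y).
Proof. by case: x => [|a|a] //; case: y. Qed.
Lemma ghostzMr x y : st_ghostz y -> st_ghostz (x * y).
Proof. by rewrite st_mulC; apply: ghostzMl. Qed.
Lemma ghostz0 : st_ghostz (stZero : R). Proof. by []. Qed.

Lemma surp_refl x : surp x x. Proof. by exists stZero; rewrite ?st_addr0. Qed.
Lemma surp_trans x y z : surp x y -> surp y z -> surp x z.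
Proof.
case=> g gG ->; case=> h hG ->; exists (h + g); first exact: ghostzD.
by rewrite st_addA.
Qed.
Lemma surpD x y x' y' : surp x y -> surp x' y' -> surp (x + x') (y + y').
Proof.
case=> g gG ->; case=> h hG ->; exists (g + h); first exact: ghostzD.
by rewrite -!st_addA (st_addA g) (st_addC g) -!st_addA.
Qed.
Lemma surpM x y x' y' : surp x y -> surp x' y' -> surp (x * x') (y * y').
Proof.
case=> g gG ->; case=> h hG ->.
exists (y * h + (g * y' + g * h)).
  by apply: ghostzD; [apply: ghostzMr|apply: ghostzD; apply: ghostzMl].
by rewrite st_mulDl !st_mulDr !st_addA.
Qed.
Lemma surp_ghost x : st_ghostz x -> surp x stZero.
Proof. by move=> gx; exists x. Qed.
Lemma surp_ghostz x y : surp x y -> st_ghostz y -> st_ghostz x.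
Proof. by case=> g gG -> yG; apply: ghostzD. Qed.
Lemma surp_tanz x y : surp x y -> st_tanz x -> x = y.
Proof.
case=> g; case: g => [|b|b] // _ ->; first by rewrite st_addr0.
case: y => [|a|a] //=; case: (oag_lt a b); case: (oag_lt b a) => //.
Qed.

Lemma surp_big (I : Type) (r : seq I) (P : pred I) (F F' : I -> R) :
  (forall i, P i -> surp (F i) (F' i)) ->
  surp (\big[@st_add G/stZero]_(i <- r | P i) F i) (\big[@st_add G/stZero]_(i <- r | P i) F' i).
Proof.
move=> H; apply: (big_ind2 surp) => //; [exact: surp_refl|exact: surpD].
Qed.
Lemma surp_bigM (I : Type) (r : seq I) (P : pred I) (F F' : I -> R) :
  (forall i, P i -> surp (F i) (F' i)) ->
  surp (\big[@st_mul G/st_one G]_(i <- r | P i) F i) (\big[@st_mul G/st_one G]_(i <- r | P i) F' i).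
Proof.
move=> H; apply: (big_ind2 surp) => //; [exact: surp_refl|exact: surpM].
Qed.

Definition stle x y : bool :=
  match x, y with
  | stZero, _ => true
  | _, stZero => false
  | (stTan a | stGh a), (stTan b | stGh b) => oag_le a b
  end.

Lemma stle_refl x : stle x x. Proof. by case: x => //= a; exact: oag_le_refl. Qed.
Lemma stle_trans y x z : stle x y -> stle y z -> stle x z.
Proof. by case: x => [|a|a] //; case: y => [|b|b] //; case: z => [|c|c] //=; apply: oag_le_trans. Qed.

Lemma stle_addl x y : stle x (x + y).
Proof.
case: x => [|a|a] //; case: y => [|b|b] /=; rewrite ?oag_le_refl //;
  case: (cmpP a b) => h //=; rewrite ?oag_le_refl //; by case/andP: h.
Qed.
Lemma stle_addr x y : stle y (x + y).
Proof. by rewrite st_addC stle_addl. Qed.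
Lemma stle_add x y z : stle x z -> stle y z -> stle (x + y) z.
Proof.
case: x => [|a|a] //; case: y => [|b|b] //; case: z => [|c|c] //=;
  by case: (cmpP a b).
Qed.

Lemma stle_big (I : Type) (r : seq I) (P : pred I) (F : I -> R) W :
  (forall i, P i -> stle (F i) W) -> stle (\big[@st_add G/stZero]_(i <- r | P i) F i) W.
Proof. by move=> H; apply: (big_ind (fun v => stle v W)) => // u v; apply: stle_add. Qed.

Lemma stle_term (I : eqType) (r : seq I) (P : pred I) (F : I -> R) i :
  i \in r -> P i -> stle (F i) (\big[@st_add G/stZero]_(j <- r | P j) F j).
Proof.
move=> ir Pi; rewrite (big_rem i) //= Pi; exact: stle_addl.
Qed.

Lemma st_addxx x : st_ghostz (x + x).
Proof. by case: x => [|a|a] //=; rewrite lt_irr. Qed.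
Lemma addle_cases x y : stle y x -> x + y = x \/ x + y = x + x.
Proof.
case: y => [|b|b]; first by rewrite st_addr0; left.
all: case: x => [|a|a] //= ab.
all: case: (cmpP a b) => h; try (by case/andP: h => _ /negP); try by [left|right; rewrite lt_irr].
all: by subst; right; rewrite !lt_irr.
Qed.
Lemma surp_xx x : surp (x + x) x.
Proof. exists (x + x); first exact: st_addxx. by case: x => [|a|a] //=; rewrite !lt_irr. Qed.
Lemma surp_addle x y : stle y x -> surp (x + y) x.
Proof. by case/addle_cases => ->; [exact: surp_refl|exact: surp_xx]. Qed.

Lemma ghost_addl x y : st_ghostz x -> stle y x -> st_ghostz (x + y).
Proof.
case: x => [|a|a] //; case: y => [|b|b] //= _ h; case: (cmpP a b) => // h'.
all: by case/andP: h' => _ /negP.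
Qed.

Lemma iter_le (c : nat) x : stle x (iter c (st_add x) x).
Proof. case: c => [|c] /=; [exact: stle_refl|exact: stle_addl]. Qed.
Lemma iterop_ghost (c : nat) x : (1 < c)%N -> st_ghostz (iterop c (@st_add G) x stZero).
Proof.
case: c => [|[|c]] // _; elim: c => [|c IH] /=; first exact: st_addxx.
rewrite st_addC; apply: ghost_addl => //; exact: stle_addl.
Qed.
Lemma iterop_surp (c : nat) x : (0 < c)%N -> surp (iterop c (@st_add G) x stZero) x.
Proof.
case: c => [|[|c]] // _; first exact: surp_refl.
have vG: st_ghostz (iterop c.+2 (@st_add G) x stZero) by apply: iterop_ghost.
have xv: stle x (iterop c.+2 (@st_add G) x stZero) by rewrite /=; exact: stle_addl.
move: (iterop _ _ _ _) vG xv => v vG xv.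
exists v => //; rewrite st_addC; case: v vG xv => [|b|b] //; case: x => [|a|a] //= _ h;
  case: (cmpP b a) => h' //; try (by case/andP: h' => _ /negP); by subst; rewrite lt_irr.
Qed.

End StBig.

End M2.
Import M2.

Module M3.
Import GRing.Theory.

Section KDef.
Variable kv : nat.
Definition mon := 'X_{1..kv}.
Definition K := seq (mon * bool).
Definition kadd (E F : K) : K := E ++ F.
Definition kmul (E F : K) : K :=
  [seq (mnm_add t.1 u.1, t.2 (+) u.2) | t <- E, u <- F].
Definition k0 : K := [::].
Definition k1 : K := [:: (mnm0, false)].
Definition ksgn (b : bool) : K := [:: (mnm0, b)].

Local Open Scope ring_scope.
Definition phiZ (E : K) : {mpoly int[kv]} := \sum_(t <- E) ((-1) ^+ t.2 *: 'X_[t.1]).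

Lemma phiZ_add E F : phiZ (kadd E F) = phiZ E + phiZ F.
Proof. by rewrite /phiZ big_cat. Qed.
Lemma phiZ_k0 : phiZ k0 = 0. Proof. by rewrite /phiZ big_nil. Qed.
Lemma phiZ_ksgn b : phiZ (ksgn b) = (-1) ^+ b.
Proof. by rewrite /phiZ big_seq1 /= mpolyX0; case: b; rewrite ?expr0 ?expr1 ?scale1r ?scaleN1r. Qed.
Lemma phiZ_k1 : phiZ k1 = 1. Proof. by rewrite phiZ_ksgn. Qed.
Lemma phiZ_mul E F : phiZ (kmul E F) = phiZ E * phiZ F.
Proof.
rewrite /phiZ /kmul big_allpairs_dep big_distrl /=; apply: eq_bigr => t _.
rewrite big_distrr /=; apply: eq_bigr => u _.
by rewrite mpolyXD signr_addb -!scalerAl -!scalerAr scalerA mulrC.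
Qed.
End KDef.

Section PhiR.
Variable G : ordAbGroup.
Local Notation R := (stR G).
Variable kv : nat.
Variable val : 'I_kv -> R.

Lemma st_pow_add (x : R) a b : st_pow x (a + b) = st_mul (st_pow x a) (st_pow x b).
Proof.
elim: a => [|a IH]; first by rewrite add0n st_mul1r.
by rewrite addSn /st_pow !iterS -/(st_pow x (a + b)) -/(st_pow x a) IH st_mulA.
Qed.

Definition ev (m : mon kv) : R := \big[@st_mul G/st_one G]_(i < kv) st_pow (val i) (m i).
Definition phiR (E : K kv) : R := \big[@st_add G/stZero]_(t <- E) ev t.1.

Lemma ev0 : ev mnm0 = st_one G.
Proof. by rewrite /ev big1 // => i _; rewrite mnm0E. Qed.
Lemma evD m1 m2 : ev (mnm_add m1 m2) = st_mul (ev m1) (ev m2).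
Proof. by rewrite /ev -big_split /=; apply: eq_bigr => i _; rewrite mnmDE st_pow_add. Qed.
Lemma ev1 i : ev (mnm1 i) = val i.
Proof.
rewrite /ev (bigD1 i) //= big1 ?mnm1E ?eqxx ?st_mulr1 /st_pow /= ?st_mulr1 //.
by move=> j /negbTE ji; rewrite mnm1E eq_sym ji.
Qed.

Lemma phiR_add E F : phiR (kadd E F) = st_add (phiR E) (phiR F).
Proof. by rewrite /phiR big_cat. Qed.
Lemma phiR_k0 : phiR (k0 kv) = stZero. Proof. by rewrite /phiR big_nil. Qed.
Lemma phiR_ksgn b : phiR (ksgn kv b) = st_one G.
Proof. by rewrite /phiR big_seq1 ev0. Qed.
Lemma phiR_k1 : phiR (k1 kv) = st_one G. Proof. exact: phiR_ksgn. Qed.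
Lemma phiR_mul E F : phiR (kmul E F) = st_mul (phiR E) (phiR F).
Proof.
rewrite /phiR /kmul big_allpairs_dep big_distrl /=; apply: eq_bigr => t _.
by rewrite big_distrr /=; apply: eq_bigr => u _; rewrite evD.
Qed.

Lemma phiR_big (I : Type) (r : seq I) (P : pred I) (F : I -> K kv) :
  phiR (\big[@kadd kv/k0 kv]_(i <- r | P i) F i) = \big[@st_add G/stZero]_(i <- r | P i) phiR (F i).
Proof. apply: (big_morph phiR phiR_add phiR_k0). Qed.
Lemma phiR_bigM (I : Type) (r : seq I) (P : pred I) (F : I -> K kv) :
  phiR (\big[@kmul kv/k1 kv]_(i <- r | P i) F i) = \big[@st_mul G/st_one G]_(i <- r | P i) phiR (F i).
Proof. apply: (big_morph phiR phiR_mul phiR_k1). Qed.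
End PhiR.

Section PhiZbig.
Variable kv : nat.
Local Open Scope ring_scope.
Lemma phiZ_big (I : Type) (r : seq I) (P : pred I) (F : I -> K kv) :
  phiZ (\big[@kadd kv/k0 kv]_(i <- r | P i) F i) = \sum_(i <- r | P i) phiZ (F i).
Proof. apply: (big_morph (@phiZ kv) (@phiZ_add kv) (@phiZ_k0 kv)). Qed.
Lemma phiZ_bigM (I : Type) (r : seq I) (P : pred I) (F : I -> K kv) :
  phiZ (\big[@kmul kv/k1 kv]_(i <- r | P i) F i) = \prod_(i <- r | P i) phiZ (F i).
Proof. apply: (big_morph (@phiZ kv) (@phiZ_mul kv) (@phiZ_k1 kv)). Qed.
End PhiZbig.

End M3.
Import M3.

Module M4.
Import GRing.Theory.

Section Transfer.
Variable kv : nat.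
Local Open Scope ring_scope.

Definition cnt (E : K kv) (m : mon kv) : nat := count (fun t => t.1 == m) E.

Lemma coefE (E : K kv) m : (phiZ E)@_m = \sum_(t <- E | t.1 == m) (-1) ^+ t.2.
Proof.
rewrite /phiZ raddf_sum [RHS]big_mkcond /=; apply: eq_bigr => t _.
by rewrite mcoeffZ mcoeffX; case: eqP => _; rewrite ?mulr1 ?mulr0.
Qed.

Lemma coef_cnt0 (E : K kv) m : cnt E m = 0%N -> (phiZ E)@_m = 0.
Proof.
rewrite coefE /cnt -big_filter => /eqP; rewrite -size_filter size_eq0 => /eqP ->.
by rewrite big_nil.
Qed.

Lemma coef_cnt1 (E : K kv) m : cnt E m = 1%N -> (phiZ E)@_m != 0.
Proof.
rewrite coefE /cnt -big_filter -size_filter.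
case: (filter _ E) => [|t [|]] //= _; rewrite big_seq1.
by rewrite signr_eq0.
Qed.

Lemma cnt_pos_of_coef (E : K kv) m : (phiZ E)@_m != 0 -> (0 < cnt E m)%N.
Proof. by rewrite lt0n; apply: contra => /eqP /coef_cnt0 ->. Qed.

Lemma cnt_mem (E : K kv) m : (0 < cnt E m)%N -> m \in map fst E.
Proof.
rewrite /cnt -has_count => /hasP [t tE /eqP <-]; exact: map_f.
Qed.

Variable G : ordAbGroup.
Variable val : 'I_kv -> stR G.
Local Notation ev := (ev val).
Local Notation phiR := (phiR val).

Lemma phiR_group (E : K kv) :
  phiR E = \big[@st_add G/stZero]_(m <- undup (map fst E))
              iterop (cnt E m) (@st_add G) (ev m) stZero.
Proof.
rewrite /phiR -(big_map fst xpredT ev) -big_undup_iterop_count.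
apply: eq_bigr => m _; by rewrite count_map.
Qed.

Lemma ev_le (F : K kv) m : m \in map fst F -> stle (ev m) (phiR F).
Proof.
move=> mF; rewrite /phiR -(big_map fst xpredT ev); exact: stle_term.
Qed.

Lemma transfer (E F : K kv) (D : seq (mon kv)) :
  phiZ E = phiZ F -> uniq D ->
  (forall m, m \in D -> cnt F m = 1%N) ->
  \big[@st_add G/stZero]_(m <- D) ev m = phiR F ->
  surp (phiR E) (phiR F).
Proof.
move=> eZ uD DF DS.
have DE m : m \in D -> (0 < cnt E m)%N.
  by move=> mD; apply: cnt_pos_of_coef; rewrite eZ coef_cnt1 // DF.
set U := undup (map fst E).
have DU : forall m, m \in D -> m \in U.
  by move=> m mD; rewrite mem_undup; apply: cnt_mem; apply: DE.
rewrite phiR_group -/U (bigID (fun m => m \in D)) /=.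
apply: (@surp_trans _ _ (st_add (\big[@st_add G/stZero]_(m <- D) ev m)
          (\big[@st_add G/stZero]_(m <- U | m \notin D)
              (if cnt E m == 1%N then ev m else stZero)))).
  apply: surpD.
    have -> : \big[@st_add G/stZero]_(m <- D) ev m =
              \big[@st_add G/stZero]_(m <- U | m \in D) ev m.
      rewrite -[RHS]big_filter; apply: perm_big.
      apply: uniq_perm => //; first by rewrite filter_uniq // undup_uniq.
      move=> m; rewrite mem_filter; apply/idP/andP => [mD|[]//]; split => //; exact: DU.
    by apply: surp_big => m mD; apply: iterop_surp; apply: DE.
  rewrite [X in surp X _]big_seq_cond [X in surp _ X]big_seq_cond.
  apply: surp_big => m /andP[mU _]; case: eqP => [->|c1]; first exact: surp_refl.
  apply: surp_ghost; apply: iterop_ghost.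
  have : (0 < cnt E m)%N.
    move: mU; rewrite mem_undup => /mapP [t tE ->]; rewrite /cnt -has_count.
    by apply/hasP; exists t.
  by case: (cnt E m) c1 => [|[|]].
rewrite DS; apply: surp_addle; apply: stle_big => m _.
case: eqP => // c1; apply: ev_le; apply: cnt_mem; apply: cnt_pos_of_coef.
by rewrite -eZ coef_cnt1.
Qed.

Lemma transfer0 (E : K kv) : phiZ E = 0 -> st_ghostz (phiR E).
Proof.
move=> eZ; have := @transfer E (k0 kv) [::]; rewrite phiZ_k0 phiR_k0 big_nil.
by move=> /(_ eZ isT (fun _ => fun x => match notF x with end) erefl) [g gG ->].
Qed.
End Transfer.

End M4.
Import M4.

Module M5.
Import GRing.Theory.
Local Open Scope ring_scope.

Section ES.
Variable R : comNzRingType.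

Definition eS n (S : {set 'I_n}) (M : 'M[R]_n) : R :=
  \sum_(s : 'S_n | perm_on S s) (-1) ^+ s * \prod_(i in S) M i (s i).

Lemma detD_diag n (a : 'I_n -> R) (M : 'M[R]_n) :
  \det (\matrix_(i, j) ((i == j)%:R * a i + M i j)) =
  \sum_(S : {set 'I_n}) (\prod_(i in ~: S) a i) * eS S M.
Proof.
rewrite /determinant.
transitivity (\sum_(s : 'S_n) \sum_(J in {set 'I_n}) (-1) ^+ s *
   \prod_i (if i \in J then (i == s i)%:R * a i else M i (s i))).
  apply: eq_bigr => s _; rewrite -big_distrr -bigA_distr /=; congr (_ * _).
  by apply: eq_bigr => i _; rewrite mxE.
rewrite exchange_big (reindex_inj (@setC_inj _)) /=; apply: eq_bigr => S _; rewrite /eS big_distrr /=.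
rewrite (bigID (fun s : 'S_n => perm_on S s)) /= [X in _ + X]big1 ?addr0.
  apply: eq_bigr => s sS; rewrite [RHS]mulrCA; congr (_ * _).
  rewrite (bigID (fun i => i \in ~: S)) /=; congr (_ * _).
    by apply: eq_bigr => i iS; rewrite iS (out_perm sS) ?eqxx ?mul1r // -in_setC.
  apply: eq_big => [i|i iS]; first by rewrite in_setC negbK.
  by rewrite (negbTE iS).
move=> s nsS.
have [x /andP[sx xS]]: exists x, (s x != x) && (x \in ~: S).
  apply/existsP; move: nsS; rewrite /perm_on; apply: contraR.
  rewrite negb_exists => /forallP H; apply/subsetP => y; rewrite inE => sy.
  by move: (H y); rewrite sy /= in_setC negbK.
by rewrite (bigD1 x) //= xS eq_sym (negbTE sx) !mul0r mulr0.
Qed.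

Lemma eS_scale n (S : {set 'I_n}) c (M : 'M[R]_n) : eS S (c *: M) = c ^+ #|S| * eS S M.
Proof.
rewrite /eS big_distrr; apply: eq_bigr => s _.
by rewrite [RHS]mulrCA; congr (_ * _); rewrite -prodr_const -big_split /=; apply: eq_bigr => i _; rewrite mxE.
Qed.

End ES.

Lemma eS_map (R1 R2 : comNzRingType) (f : {rmorphism R1 -> R2}) n (S : {set 'I_n}) (M : 'M[R1]_n) :
  eS S (map_mx f M) = f (eS S M).
Proof.
rewrite /eS rmorph_sum; apply: eq_bigr => s _.
rewrite rmorphM rmorph_sign rmorph_prod; congr (_ * _); apply: eq_bigr => i _; by rewrite mxE.
Qed.

Section Classical.
Variable R : idomainType.

Lemma gM_coef n (M : 'M[R]_n) m :
  (\det (1%:M + 'X *: map_mx polyC M))`_m = \sum_(S : {set 'I_n} | #|S| == m) eS S M.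
Proof.
have -> : 1%:M + 'X *: map_mx polyC M =
          \matrix_(i, j) ((i == j)%:R * 1 + ('X *: map_mx polyC M) i j).
  by apply/matrixP => i j; rewrite !mxE mulr1.
rewrite detD_diag coef_sum [RHS]big_mkcond /=; apply: eq_bigr => S _.
rewrite big1 ?mul1r // eS_scale (eS_map (@polyC R)) mulrC mul_polyC coefZ coefXn.
by rewrite eq_sym; case: eqP; rewrite ?mulr1 ?mulr0.
Qed.

Lemma conj_eS n (A B : 'M[R]_n) m : \det A != 0 ->
  \sum_(S : {set 'I_n} | #|S| == m) eS S (\adj A *m B *m A) =
  (\det A) ^+ m * \sum_(S : {set 'I_n} | #|S| == m) eS S B.
Proof.
move=> dA; set d := \det A.
pose P (M : 'M[R]_n) := map_mx (@polyC R) M.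
have key : P A *m (1%:M + 'X *: P (\adj A *m B *m A)) =
           (1%:M + 'X *: P (d *: B)) *m P A.
  rewrite mulmxDr mulmxDl mulmx1 mul1mx; congr (_ + _).
  rewrite -scalemxAr -scalemxAl; congr (_ *: _).
  rewrite /P -!map_mxM !mulmxA mul_mx_adj mul_scalar_mx -scalemxAl; congr (map_mx _ _).
have := congr1 determinant key; rewrite !det_mulmx /P det_map_mx mulrC.
move/(mulIf _) => /(_ _) H; have {}H := H _.
have dP : d%:P != 0 by rewrite polyC_eq0.
have := congr1 (fun p : {poly R} => p`_m) (H dP).
rewrite !gM_coef => ->; rewrite big_distrr /=; apply: eq_bigr => S /eqP <-.
by rewrite eS_scale.
Qed.
End Classical.

Lemma regroup_card (V : nmodType) n (F : {set 'I_n} -> V) :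
  \sum_(S : {set 'I_n}) F S = \sum_(k < n.+1) \sum_(S : {set 'I_n} | #|S| == (n - k)%N) F S.
Proof.
rewrite (partition_big (fun S : {set 'I_n} => (inord (n - #|S|) : 'I_n.+1)) xpredT) //.
apply: eq_bigr => k _; apply: eq_bigl => S.
have hS : (#|S| <= n)%N by rewrite -[X in (_ <= X)%N]card_ord; apply: max_card.
have hk : (k <= n)%N by rewrite -ltnS.
rewrite -val_eqE /= inordK ?ltnS ?leq_subr //; apply/eqP/eqP; move: (#|S|) hS => c hc; move: (nat_of_ord k) hk => kk hkk; lia.
Qed.

Section CH.
Variable R : comNzRingType.
Lemma CH_eS n (B : 'M[R]_n) :
  \sum_(k < n.+1) ((-1) ^+ (n - k) * \sum_(S : {set 'I_n} | #|S| == (n - k)%N) eS S B) *: B ^+ k = 0.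
Proof.
case: n B => [|n] B; first by apply/matrixP => [[]].
have := Cayley_Hamilton B.
have -> : char_poly B = \sum_(S : {set 'I_n.+1}) 'X ^+ (n.+1 - #|S|) * ((-1) ^+ #|S| * eS S B)%:P.
  rewrite /char_poly /char_poly_mx.
  have -> : 'X%:M - map_mx polyC B = \matrix_(i, j) ((i == j)%:R * 'X + (map_mx polyC (- B)) i j).
    by apply/matrixP => i j; rewrite !mxE raddfN /= mulr_natl.
  rewrite detD_diag; apply: eq_bigr => S _.
  rewrite prodr_const cardsCs setCK card_ord; congr (_ * _).
  by rewrite (eS_map (@polyC R)) -(scaleN1r B) eS_scale.
move=> H; rewrite -[X in _ = X]H rmorph_sum /= regroup_card; apply: eq_bigr => k _.
rewrite big_distrr /= scaler_suml; apply: eq_bigr => S /eqP hS.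
rewrite rmorphM rmorphXn /= horner_mx_X horner_mx_C -mulmxE mul_mx_scalar hS.
have hk : (k <= n.+1)%N by rewrite -ltnS.
by rewrite subKn // scalerA mulrA.
Qed.
End CH.

End M5.
Import M5.

Module M6.

Section PB.
Variable T : Type.
Variables (idx : T) (aop : Monoid.com_law idx) (mop : Monoid.com_law idx).
Variable n : nat.
Variable S : {set 'I_n}.
Local Notation psi := (@enum_val _ (mem S)).

Definition lfun (t : 'S_#|S|) (x : 'I_n) : 'I_n :=
  if [pick k | psi k == x] is Some k then psi (t k) else x.

Lemma lfun_val t k : lfun t (psi k) = psi (t k).
Proof.
rewrite /lfun; case: pickP => [k' /eqP /enum_val_inj -> //|/(_ k)]; by rewrite eqxx.
Qed.
Lemma lfun_out t x : x \notin S -> lfun t x = x.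
Proof.
move=> xS; rewrite /lfun; case: pickP => // k /eqP ek.
by move: (enum_valP k); rewrite ek (negbTE xS).
Qed.
Lemma psi_onto x : x \in S -> exists k, psi k = x.
Proof. move=> xS; exists (enum_rank_in xS x); exact: enum_rankK_in. Qed.

Lemma lfun_inj t : {in S &, injective (lfun t)}.
Proof.
move=> x y /psi_onto [k <-] /psi_onto [k' <-]; rewrite !lfun_val.
by move/enum_val_inj/perm_inj ->.
Qed.
Lemma lfun_sub t : [set lfun t x | x in S] \subset S.
Proof.
apply/subsetP => y /imsetP [x /psi_onto [k <-] ->]; rewrite lfun_val; exact: enum_valP.
Qed.
Definition lperm (t : 'S_#|S|) : 'S_n := perm_in (@lfun_inj t) (@lfun_sub t).

Lemma lperm_val t k : lperm t (psi k) = psi (t k).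
Proof. by rewrite /lperm perm_inE ?lfun_val // enum_valP. Qed.
Lemma lperm_on t : perm_on S (lperm t). Proof. exact: perm_in_on. Qed.

Lemma lperm_inj : injective lperm.
Proof.
move=> t1 t2 e; apply/permP => k; apply: enum_val_inj.
by rewrite -!lperm_val e.
Qed.

Lemma lperm_onto s : perm_on S s -> exists t, lperm t = s.
Proof.
move=> sS.
pose g (k : 'I_#|S|) := if [pick k' | psi k' == s (psi k)] is Some k' then k' else k.
have gP k : psi (g k) = s (psi k).
  rewrite /g; case: pickP => [k' /eqP //|].
  have sk : s (psi k) \in S by rewrite (perm_closed _ sS) enum_valP.
  have [k' ek'] := psi_onto sk.
  by move/(_ k'); rewrite ek' eqxx.
have ginj : injective g.
  by move=> k1 k2 e; apply: enum_val_inj; apply: (@perm_inj _ s); rewrite -!gP e.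
exists (perm ginj); apply/permP => x.
case: (boolP (x \in S)) => xS.
  by have [k <-] := psi_onto xS; rewrite lperm_val permE gP.
by rewrite /lperm (out_perm (perm_in_on _ _) xS) (out_perm sS xS).
Qed.

Lemma big_perm_on (F : 'S_n -> T) :
  \big[aop/idx]_(s : 'S_n | perm_on S s) F s = \big[aop/idx]_(t : 'S_#|S|) F (lperm t).
Proof.
have -> : \big[aop/idx]_(s : 'S_n | perm_on S s) F s =
          \big[aop/idx]_(s in [set lperm t | t in [set: 'S_#|S|]]) F s.
  apply: eq_bigl => s; apply/idP/imsetP => [/lperm_onto [t <-]|[t _ ->]]; last exact: lperm_on.
  by exists t; rewrite ?inE.
rewrite big_imset /=; last by move=> x y _ _; apply: lperm_inj.
by apply: eq_bigl => t; rewrite inE.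
Qed.
End PB.

Section PBst.
Variable G : ordAbGroup.
Lemma st_det_principal n (S : {set 'I_n}) (M : 'M[stR G]_n) :
  st_det (st_principal S M) =
  \big[@st_add G/stZero]_(s : 'S_n | perm_on S s) \big[@st_mul G/st_one G]_(i in S) M i (s i).
Proof.
rewrite big_perm_on /st_det; apply: congr_big => // t _.
rewrite [RHS]big_enum_val; apply: eq_bigr => k _; by rewrite mxE lperm_val.
Qed.
End PBst.

End M6.
Import M6.

Module M7.
Import GRing.Theory.

Section KMat.
Variable kv : nat.
Local Notation K := (K kv).
Local Notation kadd := (@kadd kv).
Local Notation kmul := (@kmul kv).
Local Notation k0 := (k0 kv).
Local Notation k1 := (k1 kv).
Local Notation ksgn := (ksgn kv).

Definition Kdet m (M : 'M[K]_m) : K :=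
  \big[kadd/k0]_(s : 'S_m) kmul (ksgn (odd_perm s)) (\big[kmul/k1]_(i < m) M i (s i)).
Definition Kminor m (j i : 'I_m) (M : 'M[K]_m) : 'M[K]_(m.-1) :=
  \matrix_(k, l) M (lift j k) (lift i l).
Definition Kadj m (M : 'M[K]_m) : 'M[K]_m :=
  \matrix_(i, j) kmul (ksgn (odd (j + i))) (Kdet (Kminor j i M)).
Definition Kmulmx m (M N : 'M[K]_m) : 'M[K]_m :=
  \matrix_(i, j) \big[kadd/k0]_(l < m) kmul (M i l) (N l j).
Definition KeS m (S : {set 'I_m}) (M : 'M[K]_m) : K :=
  \big[kadd/k0]_(s : 'S_m | perm_on S s) kmul (ksgn (odd_perm s)) (\big[kmul/k1]_(i in S) M i (s i)).
Definition Kid m : 'M[K]_m := \matrix_(i, j) (if i == j then k1 else k0).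
Definition Kexp m (M : 'M[K]_m) k := iter k (Kmulmx M) (Kid m).
Definition Kpow (x : K) k := iter k (kmul x) k1.

Variable G : ordAbGroup.
Variable val : 'I_kv -> stR G.
Local Notation phiR := (phiR val).
Definition mR m (M : 'M[K]_m) : 'M[stR G]_m := map_mx phiR M.

Lemma phiR_Kdet m (M : 'M[K]_m) : phiR (Kdet M) = st_det (mR M).
Proof.
rewrite /Kdet phiR_big /st_det; apply: eq_bigr => s _.
rewrite phiR_mul phiR_ksgn st_mul1r phiR_bigM; apply: eq_bigr => i _; by rewrite mxE.
Qed.
Lemma mR_Kminor m j i (M : 'M[K]_m) : mR (Kminor j i M) = st_minor j i (mR M).
Proof. by apply/matrixP => k l; rewrite !mxE. Qed.
Lemma mR_Kadj m (M : 'M[K]_m) : mR (Kadj M) = st_adj (mR M).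
Proof.
apply/matrixP => i j; rewrite !mxE phiR_mul phiR_ksgn st_mul1r phiR_Kdet mR_Kminor //.
Qed.
Lemma mR_Kmulmx m (M N : 'M[K]_m) : mR (Kmulmx M N) = st_mulmx (mR M) (mR N).
Proof.
apply/matrixP => i j; rewrite !mxE phiR_big; apply: eq_bigr => l _; by rewrite phiR_mul !mxE.
Qed.
Lemma phiR_KeS m (S : {set 'I_m}) (M : 'M[K]_m) : phiR (KeS S M) = st_det (st_principal S (mR M)).
Proof.
rewrite st_det_principal /KeS phiR_big; apply: eq_bigr => s _.
rewrite phiR_mul phiR_ksgn st_mul1r phiR_bigM; apply: eq_bigr => i _; by rewrite mxE.
Qed.
Lemma mR_Kexp m (M : 'M[K]_m) k : mR (Kexp M k) = st_expmx (mR M) k.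
Proof.
elim: k => [|k IH].
  by apply/matrixP => i j; rewrite !mxE; case: eqP => _; rewrite ?phiR_k1 ?phiR_k0.
by rewrite /Kexp iterS -/(Kexp M k) mR_Kmulmx IH.
Qed.
Lemma phiR_Kpow x k : phiR (Kpow x k) = st_pow (phiR x) k.
Proof.
elim: k => [|k IH]; first exact: phiR_k1.
by rewrite /Kpow iterS -/(Kpow x k) phiR_mul IH.
Qed.
End KMat.

Section KMatZ.
Variable kv : nat.
Local Open Scope ring_scope.
Definition mZ m (M : 'M[K kv]_m) : 'M[{mpoly int[kv]}]_m := map_mx (@phiZ kv) M.

Lemma phiZ_Kdet m (M : 'M[K kv]_m) : phiZ (Kdet M) = \det (mZ M).
Proof.
rewrite /Kdet phiZ_big /determinant; apply: eq_bigr => s _.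
rewrite phiZ_mul phiZ_ksgn phiZ_bigM; congr (_ * _); apply: eq_bigr => i _; by rewrite mxE.
Qed.
Lemma mZ_Kadj m (M : 'M[K kv]_m) : mZ (Kadj M) = \adj (mZ M).
Proof.
apply/matrixP => i j; rewrite !mxE phiZ_mul phiZ_ksgn phiZ_Kdet /cofactor signr_odd.
congr (_ * \det _); by apply/matrixP => k l; rewrite !mxE.
Qed.
Lemma mZ_Kmulmx m (M N : 'M[K kv]_m) : mZ (Kmulmx M N) = mZ M *m mZ N.
Proof.
apply/matrixP => i j; rewrite !mxE phiZ_big; apply: eq_bigr => l _; by rewrite phiZ_mul !mxE.
Qed.
Lemma phiZ_KeS m (S : {set 'I_m}) (M : 'M[K kv]_m) : phiZ (KeS S M) = eS S (mZ M).
Proof.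
rewrite /KeS /eS phiZ_big; apply: eq_bigr => s _.
rewrite phiZ_mul phiZ_ksgn phiZ_bigM; congr (_ * _); apply: eq_bigr => i _; by rewrite mxE.
Qed.
Lemma mZ_Kexp m (M : 'M[K kv]_m) k : mZ (Kexp M k) = (mZ M) ^+ k.
Proof.
elim: k => [|k IH].
  by apply/matrixP => i j; rewrite !mxE; case: eqP => _; rewrite ?phiZ_k1 ?phiZ_k0.
by rewrite /Kexp iterS -/(Kexp M k) mZ_Kmulmx IH exprS mulmxE.
Qed.
Lemma phiZ_Kpow (x : K kv) k : phiZ (Kpow x k) = phiZ x ^+ k.
Proof.
elim: k => [|k IH]; first exact: phiZ_k1.
by rewrite /Kpow iterS -/(Kpow x k) phiZ_mul IH exprS.
Qed.
End KMatZ.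

End M7.
Import M7.

Module M8.

Section Facts.
Variable G : ordAbGroup.
Local Notation R := (stR G).
Implicit Types (x y : R).

Lemma add_tan x y c : st_add x y = stTan c ->
  (x = stTan c /\ ~~ stle (stTan c) y) \/ (y = stTan c /\ ~~ stle (stTan c) x).
Proof.
case: x => [|a|a]; case: y => [|b|b] //=; try by move=> [<-]; left.
all: try (by move=> [<-]; right).
all: case: (cmpP a b) => h //; move=> [e]; subst.
all: try (by right; split => //; apply/negP => h'; case/andP: h => _ /negP).
all: by left; split => //; apply/negP => h'; case/andP: h => _ /negP.
Qed.

Lemma stle_nle (z r y : R) : ~~ stle z r -> stle y r -> ~~ stle z y.
Proof. move=> h yr; apply/negP => zy; case/negP: h; exact: stle_trans zy yr. Qed.

Lemma tan_sum (T : eqType) (s : seq T) (f : T -> R) c :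
  \big[@st_add G/stZero]_(t <- s) f t = stTan c ->
  (exists2 t0, t0 \in s & f t0 = stTan c) /\ count (fun t => stle (stTan c) (f t)) s = 1%N.
Proof.
elim: s => [|x s IH]; first by rewrite big_nil.
rewrite big_cons => /add_tan [[fx nr]|[r nfx]].
  split; first by exists x; rewrite ?mem_head.
  rewrite (_ : count _ (x :: s) = stle (stTan c) (f x) + count (fun t => stle (stTan c) (f t)) s)%N //.
  rewrite fx stle_refl add1n; congr S; apply/eqP; rewrite -leqn0 leqNgt -has_count.
  apply/hasP => [[t ts]]; apply/negP; apply: stle_nle nr _; exact: stle_term.
have [[t0 t0s ft0] c1] := IH r; split; first by exists t0; rewrite ?inE ?t0s ?orbT.
rewrite (_ : count _ (x :: s) = stle (stTan c) (f x) + count (fun t => stle (stTan c) (f t)) s)%N //.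
by rewrite (negbTE nfx) c1.
Qed.

Lemma nu_cancel (p q d e : R) : st_tangible d -> st_tangible e ->
  st_mul p q = st_mul d e -> stle q e -> stle d p.
Proof.
case: d => // c _; case: e => // e' _.
case: p => [|a|a]; case: q => [|b|b] //= [] H be.
all: have h1 : (e' + (a - e'))%R = a by rewrite GRing.addrC GRing.subrK.
all: have h2 : (b + (a - e'))%R = c by rewrite GRing.addrA (GRing.addrC b a) H GRing.addrK.
all: by move: (oag_leD2r (a - e')%R be); rewrite h1 h2.
Qed.

Lemma stle_mul (a b c d : R) : stle a b -> stle c d -> stle (st_mul a c) (st_mul b d).
Proof.
case: a => [|a|a]; case: b => [|b|b]; case: c => [|c|c]; case: d => [|d|d] //= ab cd.
all: apply: (oag_le_trans (oag_leD2r c ab)); rewrite ![(b + _)%R]GRing.addrC; exact: oag_leD2r.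
Qed.
End Facts.

Section PowCount.
Variable kv : nat.
Variable G : ordAbGroup.
Variable val : 'I_kv -> stR G.
Local Notation ev := (ev val).
Local Notation phiR := (phiR val).

Definition mpow (mu : mon kv) m := iter m (mnm_add mu) mnm0.

Lemma ev_mpow mu m : ev (mpow mu m) = st_pow (ev mu) m.
Proof.
elim: m => [|m IH]; first exact: ev0.
by rewrite /mpow iterS -/(mpow mu m) evD IH.
Qed.

Lemma cnt_kmul (X Y : K kv) mu :
  cnt (kmul X Y) mu = \sum_(x <- X) count (fun y => mnm_add x.1 y.1 == mu) Y.
Proof.
elim: X => [|x X IH]; first by rewrite big_nil.
rewrite big_cons -IH /cnt /kmul /= count_cat count_map; congr (_ + _)%N.
Qed.

Lemma mem_kmul (X Y : K kv) t : t \in kmul X Y ->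
  exists2 x, x \in X & exists2 y, y \in Y & t.1 = mnm_add x.1 y.1.
Proof. by case/allpairsPdep => x [y [xX yY ->]]; exists x => //; exists y. Qed.

Lemma st_pow_tan c m : st_tangible (st_pow (stTan c) m : stR G).
Proof. elim: m => [|m IH] //; move: IH; rewrite /st_pow /=; by case: (iter m _ _). Qed.

Lemma pow_count (FA : K kv) c : phiR FA = stTan c ->
  exists mu, [/\ ev mu = stTan c, mu \in map fst FA &
    forall m, cnt (Kpow FA m) (mpow mu m) = 1%N /\
              (forall x, x \in Kpow FA m -> stle (ev x.1) (st_pow (stTan c) m))].
Proof.
move=> FAc; have [[t0 t0F et0] c1] := tan_sum FAc.
exists t0.1; split => //; first exact: map_f.
have le_d a : a \in FA -> stle (ev a.1) (stTan c).
  by move=> aF; rewrite -FAc /phiR; apply: (stle_term (fun t => ev t.1)).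
have uniq_d a : a \in FA -> stle (stTan c) (ev a.1) -> a = t0.
  move=> aF ha; have hc := c1; rewrite -size_filter in hc.
  have ta : a \in filter (fun t => stle (stTan c) (ev t.1)) FA.
    by rewrite mem_filter ha.
  have t0a : t0 \in filter (fun t => stle (stTan c) (ev t.1)) FA.
    by rewrite mem_filter et0 stle_refl.
  move: hc ta t0a; case: (filter _ _) => [|u [|]] //= _; by rewrite !inE => /eqP -> /eqP ->.
elim=> [|m [IHc IHle]].
  split; first by rewrite /cnt /Kpow /= eqxx.
  by move=> x; rewrite /Kpow /= inE => /eqP ->; rewrite ev0; exact: stle_refl.
split; last first.
  move=> x /mem_kmul [a aF [y yP ->]]; rewrite evD.
  by rewrite /st_pow iterS -/(st_pow _ m); apply: stle_mul; [apply: le_d|apply: IHle].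
rewrite /Kpow iterS -/(Kpow FA m) cnt_kmul.
transitivity (\sum_(a <- FA) (stle (stTan c) (ev a.1) : nat)).
  apply: eq_big_seq => a aF; case: (boolP (stle _ _)) => ha.
    rewrite (uniq_d a aF ha) /mpow iterS -/(mpow t0.1 m).
    transitivity (cnt (Kpow FA m) (mpow t0.1 m)); last by rewrite IHc.
    by apply: eq_count => y; rewrite eqm_add2l.
  apply/eqP; rewrite -leqn0 leqNgt -has_count; apply/hasP => [[y yP /eqP e]].
  case/negP: ha; apply: (@nu_cancel _ _ (ev y.1) _ (st_pow (stTan c) m)) => //.
    exact: st_pow_tan.
  by rewrite -evD e /mpow iterS -/(mpow t0.1 m) evD ev_mpow et0.
  exact: IHle.
rewrite -c1 -sum1_count [RHS]big_mkcond; apply: congr_big => // a _; by case: (stle _ _).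
Qed.
End PowCount.

End M8.
Import M8.

Module M9.

Definition Vt n := (bool * 'I_n * 'I_n)%type.
Definition kvn n := #|{: Vt n}|.
Definition vid n b (i j : 'I_n) : 'I_(kvn n) := enum_rank ((b, i, j) : Vt n).
Definition isB n (v : 'I_(kvn n)) : bool := (enum_val v : Vt n).1.1.
Definition tM n b : 'M[K (kvn n)]_n := \matrix_(i, j) [:: (mnm1 (vid b i j), false)].

Section Gen.
Variable G : ordAbGroup.
Variable n : nat.
Variables A B : 'M[stR G]_n.
Definition valAB (v : 'I_(kvn n)) : stR G :=
  let: (b, i, j) := (enum_val v : Vt n) in if b then B i j else A i j.

Lemma mR_tM b : mR valAB (tM n b) = if b then B else A.
Proof.
apply/matrixP => i j; rewrite !mxE /phiR big_seq1 ev1 /valAB /vid enum_rankK.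
by case: b.
Qed.
End Gen.

Section Supp.
Variable n : nat.
Local Notation kv := (kvn n).
Definition Asupp (mu : mon kv) := [forall v, isB v ==> (mu v == 0%N)].
Definition Bsupp (mu : mon kv) := [forall v, ~~ isB v ==> (mu v == 0%N)].

Section Closure.
Variable P : mon kv -> bool.
Hypothesis P0 : P mnm0.
Hypothesis PD : forall a b, P a -> P b -> P (mnm_add a b).
Definition allM (E : K kv) := all (fun t => P t.1) E.
Lemma allM_add E F : allM E -> allM F -> allM (kadd E F).
Proof. by rewrite /allM /kadd all_cat => -> ->. Qed.
Lemma allM_mul E F : allM E -> allM F -> allM (kmul E F).
Proof.
move=> /allP hE /allP hF; apply/allP => t /mem_kmul [x xE [y yF ->]].
by apply: PD; [apply: hE|apply: hF].
Qed.
Lemma allM_k0 : allM (k0 kv). Proof. by []. Qed.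
Lemma allM_k1 : allM (k1 kv). Proof. by rewrite /allM /= P0. Qed.
Lemma allM_ksgn b : allM (ksgn kv b). Proof. by rewrite /allM /= P0. Qed.
Lemma allM_big (I : Type) (r : seq I) (Q : pred I) (F : I -> K kv) :
  (forall i, Q i -> allM (F i)) -> allM (\big[@kadd kv/k0 kv]_(i <- r | Q i) F i).
Proof. by move=> H; apply: (big_ind allM); [exact: allM_k0|exact: allM_add|exact: H]. Qed.
Lemma allM_bigM (I : Type) (r : seq I) (Q : pred I) (F : I -> K kv) :
  (forall i, Q i -> allM (F i)) -> allM (\big[@kmul kv/k1 kv]_(i <- r | Q i) F i).
Proof. by move=> H; apply: (big_ind allM); [exact: allM_k1|exact: allM_mul|exact: H]. Qed.
Lemma allM_Kpow E m : allM E -> allM (Kpow E m).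
Proof. by move=> hE; elim: m => [|m IH]; [exact: allM_k1|exact: allM_mul]. Qed.
End Closure.

Lemma Asupp0 : Asupp mnm0. Proof. by apply/forallP => v; rewrite mnm0E eqxx implybT. Qed.
Lemma Bsupp0 : Bsupp mnm0. Proof. by apply/forallP => v; rewrite mnm0E eqxx implybT. Qed.
Lemma AsuppD a b : Asupp a -> Asupp b -> Asupp (mnm_add a b).
Proof.
move=> /forallP ha /forallP hb; apply/forallP => v; rewrite mnmDE.
by apply/implyP => bv; move: (ha v) (hb v); rewrite bv /= => /eqP -> /eqP ->.
Qed.
Lemma BsuppD a b : Bsupp a -> Bsupp b -> Bsupp (mnm_add a b).
Proof.
move=> /forallP ha /forallP hb; apply/forallP => v; rewrite mnmDE.
by apply/implyP => bv; move: (ha v) (hb v); rewrite bv /= => /eqP -> /eqP ->.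
Qed.

Lemma supp_cancel x x' y y' : Asupp x -> Asupp x' -> Bsupp y -> Bsupp y' ->
  mnm_add x y = mnm_add x' y' -> x = x'.
Proof.
move=> /forallP hx /forallP hx' /forallP hy /forallP hy' /mnmP e; apply/mnmP => v.
move: (e v); rewrite !mnmDE; case bv: (isB v).
  by move: (hx v) (hx' v); rewrite bv /= => /eqP -> /eqP ->.
by move: (hy v) (hy' v); rewrite bv /= => /eqP -> /eqP ->; rewrite !addn0.
Qed.

Lemma isB_vid b (i j : 'I_n) : isB (vid b i j) = b.
Proof. by rewrite /isB /vid enum_rankK. Qed.

Lemma tM_supp b i j : allM (if b then Bsupp else Asupp) (tM n b i j).
Proof.
rewrite /allM mxE /= andbT; case: b; apply/forallP => v; rewrite mnm1E;
  apply/implyP => h; apply/eqP; case: eqP => // e; by rewrite -e isB_vid in h.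
Qed.
End Supp.

End M9.
Import M9.

Module M10.

Section FB.
Variable n : nat.
Local Notation kv := (kvn n).

Definition monS (S : {set 'I_n}) (s : 'S_n) : mon kv :=
  \big[@mnm_add kv/mnm0]_(i in S) mnm1 (vid true i (s i)).

Lemma KeS_tB (S : {set 'I_n}) :
  KeS S (tM n true) = \big[@kadd kv/k0 kv]_(s : 'S_n | perm_on S s) [:: (monS S s, odd_perm s)].
Proof.
rewrite /KeS; apply: eq_bigr => s _.
have -> : \big[@kmul kv/k1 kv]_(i in S) tM n true i (s i) = [:: (monS S s, false)].
  under eq_bigr do rewrite mxE.
  rewrite /monS; symmetry; apply: (big_morph (fun mu : mon kv => [:: (mu, false)])) => //.
by rewrite /kmul /= add0m addbF.
Qed.

Lemma cnt_big (I : Type) (r : seq I) (P : pred I) (F : I -> K kv) mu :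
  cnt (\big[@kadd kv/k0 kv]_(i <- r | P i) F i) mu = (\sum_(i <- r | P i) cnt (F i) mu)%N.
Proof.
by apply: (big_morph (fun E => cnt E mu)) => // E F'; rewrite /cnt /kadd count_cat.
Qed.

Lemma monS_coord S s (i j : 'I_n) : monS S s (vid true i j) = ((i \in S) && (s i == j) : nat).
Proof.
rewrite /monS mnm_sumE.
under eq_bigr do rewrite mnm1E /vid (inj_eq enum_rank_inj) !xpair_eqE /=.
rewrite big_mkcond (bigD1 i) //= eqxx big1 ?addn0.
  by case: (i \in S); case: (s i == j).
by move=> k /negbTE ki; rewrite ki /=; case: (k \in S).
Qed.

Lemma monS_inj S s S' s' : perm_on S s -> perm_on S' s' -> monS S s = monS S' s' -> S = S' /\ s = s'.
Proof.
move=> sS sS' e.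
have key i j : ((i \in S) && (s i == j)) = ((i \in S') && (s' i == j)).
  by move: (congr1 (fun m : mon kv => m (vid true i j)) e); rewrite !monS_coord; do 2 case: (_ && _).
have eS : S = S'.
  apply/setP => i; apply/idP/idP => h.
    by move: (key i (s i)); rewrite h eqxx /= => /esym /andP [].
  by move: (key i (s' i)); rewrite h eqxx andbT => /andP [].
subst S'; split => //; apply/permP => i; case: (boolP (i \in S)) => iS.
  by move: (key i (s i)); rewrite iS eqxx /= => /esym /eqP.
by rewrite (out_perm sS iS) (out_perm sS' iS).
Qed.

Lemma sum_atmost1 (I J : finType) (f : I -> J -> bool) :
  (forall i j i' j', f i j -> f i' j' -> i = i' /\ j = j') ->
  (\sum_i \sum_j (f i j : nat) <= 1)%N.
Proof.
move=> H; rewrite pair_bigA /=.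
case: (pickP (fun p : I * J => f p.1 p.2)) => [p fp|none].
  rewrite (bigD1 p) //= fp big1 // => q qp.
  case fq: (f q.1 q.2) => //; have [e1 e2] := H _ _ _ _ fp fq.
  by move: qp; rewrite [q]surjective_pairing -e1 -e2 -surjective_pairing eqxx.
by rewrite big1 // => q _; rewrite none.
Qed.

Lemma cnt_FB m mu :
  (cnt (\big[@kadd kv/k0 kv]_(S : {set 'I_n} | #|S| == m) KeS S (tM n true)) mu <= 1)%N.
Proof.
rewrite cnt_big.
have -> : (\sum_(S : {set 'I_n} | #|S| == m) cnt (KeS S (tM n true)) mu =
  \sum_(S : {set 'I_n}) \sum_(s : 'S_n)
     ((#|S| == m) && perm_on S s && (monS S s == mu) : nat))%N.
  rewrite big_mkcond; apply: eq_bigr => S _; rewrite KeS_tB cnt_big.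
  case: (#|S| == m); last by rewrite big1.
  rewrite big_mkcond; apply: eq_bigr => s _; case: (perm_on S s) => //=.
  by rewrite /cnt /= addn0.
apply: sum_atmost1 => S s S' s' /andP [/andP [_ h1] /eqP e1] /andP [/andP [_ h2] /eqP e2].
by apply: monS_inj => //; rewrite e1 e2.
Qed.

Lemma FB_supp m : allM (@Bsupp n) (\big[@kadd kv/k0 kv]_(S : {set 'I_n} | #|S| == m) KeS S (tM n true)).
Proof.
apply: allM_big => S _; apply: allM_big => s _; apply: (allM_mul (@BsuppD n)).
  exact: (allM_ksgn (@Bsupp0 n)).
apply: (allM_bigM (@Bsupp0 n) (@BsuppD n)) => i _; exact: (@tM_supp n true).
Qed.
End FB.

End M10.
Import M10.

Module M11.
Import GRing.Theory.

Lemma detXA_neq0 n : (\det (mZ (tM n false)) != 0 :> {mpoly int[kvn n]})%R.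
Proof.
pose v0 (i : 'I_(kvn n)) : int :=
  ((~~ isB i) && ((enum_val i : Vt n).1.2 == (enum_val i : Vt n).2))%:R%R.
have h : map_mx (meval v0) (mZ (tM n false)) = 1%:M%R.
  apply/matrixP => i j; rewrite !mxE /phiZ big_seq1 /= expr0 scale1r.
  rewrite mevalXU /v0 isB_vid /vid enum_rankK /=.
  by case: (i == j).
apply/eqP => e; move: (congr1 (meval v0) e); rewrite -det_map_mx h det1 raddf0 => /eqP.
by rewrite oner_eq0.
Qed.

Lemma uniq_fst (X : eqType) (Y : eqType) (s : seq (X * Y)) :
  (forall x, (count (fun t => t.1 == x) s <= 1)%N) -> uniq (map fst s).
Proof.
elim: s => [|t s IH] //= cs; rewrite IH ?andbT.
  apply/negP => /mapP [u us et]; have := cs t.1; rewrite /= eqxx add1n ltnS leqn0 => /eqP.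
  by move/eqP; rewrite -leqn0 leqNgt -has_count => /negP; apply; apply/hasP; exists u => //; rewrite et.
by move=> x; move: (cs x); rewrite /=; case: (t.1 == x) => //= h; apply: leq_trans h.
Qed.

Section Main.
Variable G : ordAbGroup.
Variable n : nat.
Variables A B : 'M[stR G]_n.
Local Notation val := (valAB A B).
Local Notation kv := (kvn n).

Lemma main_surp m : st_tangible (st_det A) ->
  surp (\big[@st_add G/stZero]_(S : {set 'I_n} | #|S| == m)
          st_det (st_principal S (st_mulmx (st_mulmx (st_adj A) B) A)))
       (st_mul (st_pow (st_det A) m)
          (\big[@st_add G/stZero]_(S : {set 'I_n} | #|S| == m) st_det (st_principal S B))).
Proof.
move=> dT.
set tA := tM n false; set tB := tM n true.
set FA := Kdet tA.
set FB := \big[@kadd kv/k0 kv]_(S : {set 'I_n} | #|S| == m) KeS S tB.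
set F := kmul (Kpow FA m) FB.
set E := \big[@kadd kv/k0 kv]_(S : {set 'I_n} | #|S| == m) KeS S (Kmulmx (Kmulmx (Kadj tA) tB) tA).
have mA : mR val tA = A by rewrite /tA mR_tM.
have mB : mR val tB = B by rewrite /tB mR_tM.
have ER : phiR val E = \big[@st_add G/stZero]_(S : {set 'I_n} | #|S| == m)
          st_det (st_principal S (st_mulmx (st_mulmx (st_adj A) B) A)).
  by rewrite /E phiR_big; apply: eq_bigr => S _; rewrite phiR_KeS !mR_Kmulmx mR_Kadj mA mB.
have FAR : phiR val FA = st_det A by rewrite /FA phiR_Kdet mA.
have FBR : phiR val FB = \big[@st_add G/stZero]_(S : {set 'I_n} | #|S| == m) st_det (st_principal S B).
  by rewrite /FB phiR_big; apply: eq_bigr => S _; rewrite phiR_KeS mB.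
have FR : phiR val F = st_mul (st_pow (st_det A) m)
          (\big[@st_add G/stZero]_(S : {set 'I_n} | #|S| == m) st_det (st_principal S B)).
  by rewrite /F phiR_mul phiR_Kpow FAR FBR.
have EZ : phiZ E = phiZ F.
  rewrite /F phiZ_mul phiZ_Kpow /FA phiZ_Kdet /E /FB !phiZ_big.
  transitivity (\sum_(S : {set 'I_n} | #|S| == m) eS S (\adj (mZ tA) *m mZ tB *m mZ tA))%R.
    by apply: eq_bigr => S _; rewrite phiZ_KeS !mZ_Kmulmx mZ_Kadj.
  rewrite conj_eS ?detXA_neq0 //; congr (_ * _)%R; apply: eq_bigr => S _; by rewrite phiZ_KeS.
rewrite -ER -FR.
move: dT FAR; case: (st_det A) => // c _ FAR.
have [mu [emu muFA Hpow]] := pow_count FAR.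
have [cP _] := Hpow m.
have Asupp_mu : Asupp mu.
  have : allM (@Asupp n) FA.
    apply: allM_big => s _; apply: (allM_mul (@AsuppD n)); first exact: (allM_ksgn (@Asupp0 n)).
    apply: (allM_bigM (@Asupp0 n) (@AsuppD n)) => i _; exact: (@tM_supp n false).
  by move/allP => h; case/mapP: muFA => t tF ->; apply: h.
have Apow : allM (@Asupp n) (Kpow FA m).
  apply: (allM_Kpow (@Asupp0 n) (@AsuppD n)).
  apply: allM_big => s _; apply: (allM_mul (@AsuppD n)); first exact: (allM_ksgn (@Asupp0 n)).
  apply: (allM_bigM (@Asupp0 n) (@AsuppD n)) => i _; exact: (@tM_supp n false).
have Amu : Asupp (mpow mu m).
  by elim: m {cP Hpow Apow F FB E EZ ER FR FBR} => [|k IH]; [exact: Asupp0|exact: AsuppD].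
have BFB := FB_supp n m; rewrite -/tB -/FB in BFB.
have cFB := @cnt_FB n m; rewrite -/tB -/FB in cFB.
pose D := map (mnm_add (mpow mu m)) (map fst FB).
apply: (transfer (E := E) (F := F) (D := D)) => //.
- by rewrite /D map_inj_uniq; [apply: uniq_fst | exact: addmI].
- move=> x /mapP [w /mapP [t tFB ->] ->].
  have ct : cnt FB t.1 = 1%N.
    apply/eqP; rewrite eqn_leq cFB /= /cnt -has_count; apply/hasP; by exists t.
  rewrite /F cnt_kmul.
  transitivity (\sum_(y <- Kpow FA m) ((y.1 == mpow mu m) : nat))%N.
    apply: eq_big_seq => y yP; case: eqP => [->|ne].
      rewrite /= -ct; apply: eq_count => z; by rewrite eqm_add2l.
    apply/eqP; rewrite -leqn0 leqNgt -has_count; apply/hasP => [[z zF /eqP e]]; apply: ne.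
    apply: (supp_cancel _ _ _ _ e) => //.
    + by move/allP: Apow => /(_ y yP).
    + by move/allP: BFB => /(_ z zF).
    + by move/allP: BFB => /(_ t tFB).
  by rewrite -cP /cnt -sum1_count [RHS]big_mkcond; apply: congr_big => // y _; case: eqP.
- rewrite /D big_map big_map /F phiR_mul phiR_Kpow FAR [phiR val FB]/phiR big_distrr /=.
  by apply: eq_bigr => t _; rewrite evD ev_mpow emu.
Qed.
End Main.

Section CHg.
Variable G : ordAbGroup.
Variable n : nat.
Variable B : 'M[stR G]_n.

Lemma peval_entry m (f : {ffun 'I_m.+1 -> stR G}) (M : 'M[stR G]_n) i j :
  (st_pevalmx f M) i j = \big[@st_add G/stZero]_(k < m.+1) st_mul (f k) ((st_expmx M k) i j).
Proof.
rewrite /st_pevalmx (big_morph (fun N : 'M[stR G]_n => N i j) (id1 := stZero) (op1 := @st_add G)).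
- by apply: eq_bigr => k _; rewrite mxE.
- by move=> x y; rewrite mxE.
- by rewrite mxE.
Qed.

Lemma CH_ghost i j : st_ghostz ((st_pevalmx (st_charpoly B) B) i j).
Proof.
set tB := tM n true.
pose E := \big[@kadd (kvn n)/k0 (kvn n)]_(k < n.+1)
   kmul (kmul (ksgn (kvn n) (odd (n - k)))
     (\big[@kadd (kvn n)/k0 (kvn n)]_(S : {set 'I_n} | #|S| == (n - k)%N) KeS S tB))
     (Kexp tB k i j).
have mB : mR (valAB B B) tB = B by rewrite /tB mR_tM.
have -> : (st_pevalmx (st_charpoly B) B) i j = phiR (valAB B B) E.
  rewrite peval_entry /E phiR_big; apply: eq_bigr => k _.
  rewrite !phiR_mul phiR_ksgn st_mul1r phiR_big ffunE.
  congr st_mul; last by rewrite -{1}mB -mR_Kexp mxE.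
  by apply: eq_bigr => S _; rewrite phiR_KeS mB.
apply: transfer0.
have H := congr1 (fun M : 'M[{mpoly int[kvn n]}]_n => M i j) (CH_eS (mZ tB)).
rewrite /= summxE mxE in H; rewrite -[X in _ = X]H.
rewrite /E phiZ_big; apply: eq_bigr => k _; rewrite !mxE !phiZ_mul phiZ_ksgn signr_odd phiZ_big.
congr (_ * _ * _)%R; last by rewrite -mZ_Kexp mxE.
by apply: eq_bigr => S _; rewrite phiZ_KeS.
Qed.
End CHg.

End M11.
Import M11.

Module M12.

Section Final.
Variable G : ordAbGroup.
Local Notation R := (stR G).

Lemma st_pow_mul (x y : R) m : st_pow (st_mul x y) m = st_mul (st_pow x m) (st_pow y m).
Proof.
elim: m => [|m IH]; first exact: (esym (st_mul1r (st_one G))).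
rewrite /st_pow !iterS -!/(st_pow _ m) IH.
by rewrite -!st_mulA; congr st_mul; rewrite st_mulC -st_mulA; congr st_mul; rewrite st_mulC.
Qed.

Lemma st_pow_one m : st_pow (st_one G) m = st_one G.
Proof. by elim: m => [|m IH] //; rewrite /st_pow iterS -/(st_pow _ m) IH st_mul1r. Qed.

Lemma prod_const_ord p (c : R) : \big[@st_mul G/st_one G]_(i < p) c = st_pow c p.
Proof. by rewrite big_const_ord. Qed.

Lemma det_scale p (c : R) (M : 'M[R]_p) : st_det (st_scalemx c M) = st_mul (st_pow c p) (st_det M).
Proof.
rewrite /st_det big_distrr /=; apply: eq_bigr => s _.
rewrite -prod_const_ord -big_split /=; apply: eq_bigr => i _; by rewrite mxE.
Qed.

Lemma mulmx_scale n (c : R) (X Y : 'M[R]_n) :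
  st_mulmx (st_scalemx c X) Y = st_scalemx c (st_mulmx X Y).
Proof.
apply/matrixP => i j; rewrite !mxE big_distrr /=; apply: eq_bigr => l _.
by rewrite mxE st_mulA.
Qed.

Lemma principal_scale n (S : {set 'I_n}) (c : R) (M : 'M[R]_n) :
  st_principal S (st_scalemx c M) = st_scalemx c (st_principal S M).
Proof. by apply/matrixP => i j; rewrite !mxE. Qed.

Lemma charpoly_surp n (A B : 'M[R]_n) (k : 'I_n.+1) :
  st_nonsingular A ->
  surp (st_charpoly (st_mulmx (st_mulmx (st_nabla A) B) A) k) (st_charpoly B k).
Proof.
rewrite /st_nonsingular => dT; rewrite !ffunE.
set m := (n - k)%N.
set c := st_inv (st_det A).
have -> : \big[@st_add G/stZero]_(S : {set 'I_n} | #|S| == m)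
            st_det (st_principal S (st_mulmx (st_mulmx (st_nabla A) B) A)) =
          st_mul (st_pow c m) (\big[@st_add G/stZero]_(S : {set 'I_n} | #|S| == m)
            st_det (st_principal S (st_mulmx (st_mulmx (st_adj A) B) A))).
  rewrite big_distrr /=; apply: eq_bigr => S /eqP <-.
  by rewrite /st_nabla !mulmx_scale principal_scale det_scale.
have cd : st_mul (st_pow c m) (st_pow (st_det A) m) = st_one G.
  rewrite -st_pow_mul /c; move: dT; case: (st_det A) => // a _ /=.
  by rewrite GRing.addNr st_pow_one.
apply: surp_trans (surpM (surp_refl (st_pow c m)) (main_surp B m dT)) _.
by rewrite st_mulA cd st_mul1r; exact: surp_refl.
Qed.
End Final.


End M12.
Import M12.

Theorem corollary5p5 (G : ordAbGroup) (n : nat)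
    (A B B' : 'M[stR G]_n) :
  st_nonsingular A ->
  B' = st_mulmx (st_mulmx (st_nabla A) B) A ->
  [/\ (forall l : stR G, st_eigenvalue B l -> st_eigenvalue B' l),
      ((forall k : 'I_n.+1, st_tanz (st_charpoly B' k)) ->
         st_charpoly B' = st_charpoly B)
    & st_ghostmx (st_pevalmx (st_charpoly B') B)].
Proof.
move=> nsA eB'.
have H k : surp (st_charpoly B' k) (st_charpoly B k) by rewrite eB'; apply: charpoly_surp.
split.
- move=> l [lt lg]; split => //; apply: (surp_ghostz _ lg).
  by rewrite /st_peval; apply: surp_big => k _; apply: surpM; [apply: H|apply: surp_refl].
- by move=> tz; apply/ffunP => k; apply: surp_tanz (H k) (tz k).
- move=> i j; apply: (surp_ghostz _ (CH_ghost B i j)).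
  rewrite !peval_entry; apply: surp_big => k _; apply: surpM; [apply: H|apply: surp_refl].
Qed.
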